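(* Let $m=2k+1$ with $k$ a nonnegative integer and let $n\ge m-1$ be an integer. Let $M(u)=M(u^2+u^{2m})$, $u\in(0,+\infty)$, where $M(h)$ is the first order Melnikov function of $(1.1)_\epsilon$. Put $z=[n/2]m-\frac{m^2-5m+4}{2}$ and $q=[n/2]m-\frac{m^2-5m}{2}$. Then $M(u)$ is a linear combination of the following $\left[\frac{n-1}{2}\right]+\left[\frac n2\right]m-\frac14m^2+\frac32m+\frac34$ linearly independent functions: $$u^{2p+1}\ (0\le p\le z);\qquad u^{2q+2s+k(m-1)+1}\ (0\le s\le \tfrac{m-5}{2},\ 0\le k\le 2s+1);\qquad (u^2+u^{2m})^{l+1}\ (0\le l\le[(n-1)/2]),$$ (i.e. $u,u^3,\dots,u^{2z+1},u^{2q+1},u^{2q+m},u^{2q+3},u^{2q+m+2},u^{2q+2m+1},\dots,u^{2q+m^2-4m},u^2+u^{2m},\dots,(u^2+u^{2m})^{[(n-1)/2]+1}$), and the coefficients of this linear combination are independent, i.e. as the coefficients of $p^\pm,q^\pm$ range over all real values these coefficients take all real values.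
   Context: $[x]$ is the integer part. System $(1.1)_\epsilon$: $\dot x=y+\epsilon p^{+},\ \dot y=-x+\epsilon q^{+}$ for $y\ge x^{m}$, and $\dot x=y+\epsilon p^{-},\ \dot y=-x+\epsilon q^{-}$ for $y<x^{m}$, where $p^{\pm}=\sum_{i+j=0}^{n}a^{\pm}_{i,j}x^iy^j$, $q^{\pm}=\sum_{i+j=0}^{n}b^{\pm}_{i,j}x^iy^j$ are arbitrary real polynomials of degree $n$. For $h>0$, $u=u(h)>0$ solves $u^2+u^{2m}=h$; $L_h^{+}$ is the arc of $x^2+y^2=h$ in $\{y\ge x^m\}$ traversed clockwise from $(-u,(-u)^m)$ to $(u,u^m)$, and $L_h^-$ the arc in $\{y\le x^m\}$ traversed clockwise from $(u,u^m)$ to $(-u,(-u)^m)$. The first order Melnikov function is $M(h)=\int_{L_h^+}q^+dx-p^+dy+\int_{L_h^-}q^-dx-p^-dy$. *)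

(* Defs.v *)
From Stdlib Require Import Reals ZArith List.
From Coquelicot Require Import Coquelicot.
Open Scope R_scope.

Definition poly2 (c : nat -> nat -> R) (n : nat) (x y : R) : R :=
  sum_f_R0 (fun i => sum_f_R0 (fun j => c i j * x ^ i * y ^ j) (n - i)) n.

Definition line_integral (P Q : R -> R -> R) (g1 g2 : R -> R) (a b : R) : R :=
  RInt (fun t => P (g1 t) (g2 t) * Derive g1 t + Q (g1 t) (g2 t) * Derive g2 t) a b.

(* For u > 0 and h = u^2 + u^(2m): radius sqrt h, and the polar angle of the
   switching point (u, u^m) is atan (u^(m-1)); the other one (-u,(-u)^m) =
   (-u,-u^m) (m odd) has angle atan (u^(m-1)) + PI. *)
Definition radius (m : nat) (u : R) : R := sqrt (u ^ 2 + u ^ (2 * m)).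
Definition ang0 (m : nat) (u : R) : R := atan (u ^ (m - 1)).

(* L_h^+ : arc of x^2+y^2=h in {y >= x^m}, clockwise from (-u,(-u)^m) to (u,u^m):
   polar angle decreases from ang0+PI to ang0, t in [0,PI]. *)
Definition Lplus_x (m : nat) (u t : R) : R := radius m u * cos (ang0 m u + PI - t).
Definition Lplus_y (m : nat) (u t : R) : R := radius m u * sin (ang0 m u + PI - t).
(* L_h^- : arc in {y <= x^m}, clockwise from (u,u^m) to (-u,(-u)^m):
   polar angle decreases from ang0 to ang0-PI, t in [0,PI]. *)
Definition Lminus_x (m : nat) (u t : R) : R := radius m u * cos (ang0 m u - t).
Definition Lminus_y (m : nat) (u t : R) : R := radius m u * sin (ang0 m u - t).

(* First order Melnikov function M(h) = int_{L_h^+} q^+ dx - p^+ dy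
   + int_{L_h^-} q^- dx - p^- dy, evaluated at h = u^2 + u^(2m), i.e. M(u).
   ap, bp, am, bm are the coefficients a^+, b^+, a^-, b^- of p^+, q^+, p^-, q^-. *)
Definition melnikov_u (m n : nat) (ap bp am bm : nat -> nat -> R) (u : R) : R :=
  line_integral (poly2 bp n) (fun x y => - poly2 ap n x y)
                (Lplus_x m u) (Lplus_y m u) 0 PI
  + line_integral (poly2 bm n) (fun x y => - poly2 am n x y)
                (Lminus_x m u) (Lminus_y m u) 0 PI.

(* Integer parameters (Z.div is floor division, so [x] is the integer part). *)
Definition zpar (m n : nat) : Z :=
  (Z.of_nat n / 2) * Z.of_nat m - (Z.of_nat m * Z.of_nat m - 5 * Z.of_nat m + 4) / 2.
Definition qpar (m n : nat) : Z :=
  (Z.of_nat n / 2) * Z.of_nat m - (Z.of_nat m * Z.of_nat m - 5 * Z.of_nat m) / 2.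

(* The family of functions, with m = 2k+1:
   u^(2p+1), 0 <= p <= z;
   u^(2q+2s+j(m-1)+1), 0 <= s <= (m-5)/2, 0 <= j <= 2s+1  (s ranges over 0..k-2);
   (u^2+u^(2m))^(l+1), 0 <= l <= [(n-1)/2]. *)
Definition fam1 (m n : nat) : list (R -> R) :=
  map (fun p => fun u : R => u ^ (2 * p + 1)) (seq 0 (Z.to_nat (zpar m n + 1))).
Definition fam2 (k n : nat) : list (R -> R) :=
  flat_map (fun s =>
    map (fun j => fun u : R =>
           u ^ (Z.to_nat (2 * qpar (2 * k + 1) n + 2 * Z.of_nat s
                          + Z.of_nat j * (Z.of_nat (2 * k + 1) - 1) + 1)))
        (seq 0 (2 * s + 2)))
    (seq 0 (k - 1)).
Definition fam3 (m n : nat) : list (R -> R) :=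
  map (fun l => fun u : R => (u ^ 2 + u ^ (2 * m)) ^ (l + 1))
      (seq 0 (Z.to_nat ((Z.of_nat n - 1) / 2 + 1))).
Definition basis (k n : nat) : list (R -> R) :=
  fam1 (2 * k + 1) n ++ fam2 k n ++ fam3 (2 * k + 1) n.

Fixpoint lincomb_from (c : nat -> R) (B : list (R -> R)) (i : nat) (u : R) : R :=
  match B with
  | nil => 0
  | f :: B' => c i * f u + lincomb_from c B' (S i) u
  end.
Definition lincomb (c : nat -> R) (B : list (R -> R)) (u : R) : R := lincomb_from c B 0 u.

(* Main.v *)
Require Import Defs.
From Stdlib Require Import Reals ZArith List Lia Lra FinFun.
From Coquelicot Require Import Coquelicot.
Open Scope R_scope.

Ltac rring := match goal with |- ?A = ?B => change (A = B :> R) end; ring.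

Lemma cont_mult (f g : R -> R) t : continuous f t -> continuous g t ->
  continuous (fun s => f s * g s) t.
Proof. intros; apply (continuous_mult f g); auto. Qed.
Lemma cont_plus (f g : R -> R) t : continuous f t -> continuous g t ->
  continuous (fun s => f s + g s) t.
Proof. intros; apply (continuous_plus f g); auto. Qed.
Lemma cont_const (c t : R) : continuous (fun _ => c) t.
Proof. apply continuous_const. Qed.
Lemma cont_pow (f : R -> R) t k : continuous f t -> continuous (fun s => f s ^ k) t.
Proof.
  intros H; induction k as [|k IH]; simpl.
  - apply cont_const.
  - apply cont_mult; auto.
Qed.
Lemma cont_sum (f : nat -> R -> R) t N : (forall i, continuous (f i) t) ->
  continuous (fun s => sum_f_R0 (fun i => f i s) N) t.
Proof.
  intros H; induction N as [|N IH]; simpl; auto.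
  apply cont_plus; auto.
Qed.

Lemma minusR (a b : R) : @minus R_AbelianGroup a b = a - b.
Proof. reflexivity. Qed.

Lemma exRI (f : R -> R) a b : (forall t, continuous f t) -> ex_RInt f a b.
Proof. intros H; apply (@ex_RInt_continuous R_CompleteNormedModule); intros; apply H. Qed.

Lemma RInt_plusR (f g : R -> R) a b : (forall t, continuous f t) -> (forall t, continuous g t) ->
  RInt (fun t => f t + g t) a b = RInt f a b + RInt g a b.
Proof. intros; apply (RInt_plus f g); apply exRI; auto. Qed.
Lemma RInt_scalR (f : R -> R) a b l : (forall t, continuous f t) ->
  RInt (fun t => l * f t) a b = l * RInt f a b.
Proof. intros; apply (RInt_scal f a b l); apply exRI; auto. Qed.

Lemma RInt_sumR (f : nat -> R -> R) a b N : (forall i t, continuous (f i) t) ->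
  RInt (fun t => sum_f_R0 (fun i => f i t) N) a b = sum_f_R0 (fun i => RInt (f i) a b) N.
Proof.
  intros H; induction N as [|N IH]; simpl.
  - apply RInt_ext; auto.
  - rewrite RInt_plusR; [rewrite IH; auto| |auto].
    intros; apply cont_sum; auto.
Qed.

Definition CurveH (x y : R -> R) (x0 y0 : R) : Prop :=
  (forall t, is_derive x t (y t)) /\ (forall t, is_derive y t (- x t)) /\
  x 0 = x0 /\ y 0 = y0 /\ x PI = - x0 /\ y PI = - y0 /\
  (forall t, x t ^ 2 + y t ^ 2 = x0 ^ 2 + y0 ^ 2).

Definition J (x y : R -> R) (a b : nat) : R := RInt (fun t => x t ^ a * y t ^ b) 0 PI.

Lemma curve_cont x y x0 y0 : CurveH x y x0 y0 ->
  (forall t, continuous x t) /\ (forall t, continuous y t).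
Proof.
  intros (Hx & Hy & _).
  split; intros t; apply (@ex_derive_continuous R_AbsRing R_NormedModule); eexists; eauto.
Qed.

Lemma mono_cont x y x0 y0 a b : CurveH x y x0 y0 -> forall t,
  continuous (fun s => x s ^ a * y s ^ b) t.
Proof.
  intros H t; destruct (curve_cont _ _ _ _ H) as [Hx Hy].
  apply cont_mult; apply cont_pow; auto.
Qed.

Lemma J_ftc x y x0 y0 p q : CurveH x y x0 y0 ->
  INR p * J x y (p - 1) (q + 1) - INR q * J x y (p + 1) (q - 1)
  = (- x0) ^ p * (- y0) ^ q - x0 ^ p * y0 ^ q.
Proof.
  intros H. pose proof H as H'.
  destruct H' as (Hx & Hy & H0 & H1 & H2 & H3 & _).
  unfold J.
  rewrite <- (RInt_scalR _ _ _ _ (mono_cont _ _ _ _ _ _ H)).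
  rewrite <- (RInt_scalR _ _ _ _ (mono_cont _ _ _ _ _ _ H)).
  assert (E: RInt (fun t => INR p * (x t ^ (p - 1) * y t ^ (q + 1))) 0 PI -
             RInt (fun t => INR q * (x t ^ (p + 1) * y t ^ (q - 1))) 0 PI
           = RInt (fun t => INR p * (x t ^ (p - 1) * y t ^ (q + 1)) +
                            (-1) * (INR q * (x t ^ (p + 1) * y t ^ (q - 1)))) 0 PI).
  { rewrite RInt_plusR. rewrite (RInt_scalR (fun t => INR q * (x t ^ (p+1) * y t ^ (q-1))) 0 PI (-1)). ring.
    - intros t; apply cont_mult; [apply cont_const|apply mono_cont with x0 y0; auto].
    - intros t; apply cont_mult; [apply cont_const|apply mono_cont with x0 y0; auto].
    - intros t; apply cont_mult; [apply cont_const|].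
      apply cont_mult; [apply cont_const|apply mono_cont with x0 y0; auto]. }
  rewrite E; clear E.
  apply is_RInt_unique.
  replace ((- x0) ^ p * (- y0) ^ q - x0 ^ p * y0 ^ q) with
    (@minus R_AbelianGroup ((fun t => x t ^ p * y t ^ q) PI) ((fun t => x t ^ p * y t ^ q) 0))
    by (rewrite minusR; simpl; rewrite H0, H1, H2, H3; ring).
  apply (@is_RInt_derive R_CompleteNormedModule (fun t => x t ^ p * y t ^ q)).
  - intros t _.
    eapply is_derive_ext.
    { intros s; reflexivity. }
    evar (d : R).
    replace (INR p * (x t ^ (p - 1) * y t ^ (q + 1)) + -1 * (INR q * (x t ^ (p + 1) * y t ^ (q - 1))))
      with d.
    + apply (is_derive_mult (fun s => x s ^ p) (fun s => y s ^ q)).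
      * apply is_derive_pow; auto.
      * apply is_derive_pow; auto.
      * intros; apply Rmult_comm.
    + unfold d, plus, mult; simpl.
      rewrite !Nat.add_1_r.
      destruct p as [|p]; destruct q as [|q]; simpl; rewrite ?Nat.sub_0_r; ring.
  - intros t _.
    destruct (curve_cont _ _ _ _ H) as [Cx Cy].
    apply cont_plus; apply cont_mult; try apply cont_const.
    + apply mono_cont with x0 y0; auto.
    + apply cont_mult; [apply cont_const| apply mono_cont with x0 y0; auto].
Qed.

Lemma J_h x y x0 y0 a b : CurveH x y x0 y0 ->
  J x y (a + 2) b + J x y a (b + 2) = (x0 ^ 2 + y0 ^ 2) * J x y a b.
Proof.
  intros H. pose proof H as H'. destruct H' as (_ & _ & _ & _ & _ & _ & Hc).
  unfold J. rewrite <- RInt_plusR by (intros; apply mono_cont with x0 y0; auto).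
  rewrite <- RInt_scalR by (intros; apply mono_cont with x0 y0; auto).
  apply RInt_ext. intros t _. rewrite <- (Hc t).
  rewrite !pow_add. rring.
Qed.

Lemma J_00 x y : J x y 0 0 = PI.
Proof.
  unfold J. simpl. rewrite (RInt_ext _ (fun _ => 1)) by (intros; rring).
  rewrite RInt_const. unfold scal; simpl; unfold mult; simpl. rring.
Qed.

Inductive OF (e : nat) : (R -> R -> R) -> Prop :=
| OF_mono p q L lam : (p + q + 2 * L = e)%nat ->
    OF e (fun x y => lam * x ^ p * y ^ q * (x ^ 2 + y ^ 2) ^ L)
| OF_add f g : OF e f -> OF e g -> OF e (fun x y => f x y + g x y)
| OF_ext f g : OF e f -> (forall x y, f x y = g x y) -> OF e g.

Lemma OF_scal e f al : OF e f -> OF e (fun x y => al * f x y).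
Proof.
  induction 1.
  - eapply OF_ext; [apply (OF_mono e p q L (al * lam)); auto|]. intros; simpl; ring.
  - eapply OF_ext; [apply (OF_add _ _ _ IHOF1 IHOF2)|]. intros; simpl; ring.
  - eapply OF_ext; [apply IHOF|]. intros; simpl; rewrite H0; ring.
Qed.

Lemma OF_h e f : OF e f -> OF (e + 2) (fun x y => (x ^ 2 + y ^ 2) * f x y).
Proof.
  induction 1.
  - eapply OF_ext; [apply (OF_mono (e + 2) p q (S L) lam); lia|]. intros; simpl; ring.
  - eapply OF_ext; [apply (OF_add _ _ _ IHOF1 IHOF2)|]. intros; simpl; ring.
  - eapply OF_ext; [apply IHOF|]. intros; simpl; rewrite H0; ring.
Qed.

Definition Form (e : nat) (F : R -> R -> R) : Prop :=
  if Nat.even e then exists kap, forall x y, F x y = kap * PI * (x ^ 2 + y ^ 2) ^ (e / 2)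
  else OF e F.

Lemma Form_lin e f g al be : Form e f -> Form e g ->
  Form e (fun x y => al * f x y + be * g x y).
Proof.
  unfold Form; destruct (Nat.even e).
  - intros [k1 H1] [k2 H2]. exists (al * k1 + be * k2). intros; rewrite H1, H2; ring.
  - intros H1 H2. apply OF_add; apply OF_scal; auto.
Qed.

Lemma Form_ext e f g : Form e f -> (forall x y, f x y = g x y) -> Form e g.
Proof.
  unfold Form; destruct (Nat.even e).
  - intros [k1 H1] E. exists k1. intros; rewrite <- E; auto.
  - intros; eapply OF_ext; eauto.
Qed.

Lemma Form_h e f : Form e f -> Form (e + 2) (fun x y => (x ^ 2 + y ^ 2) * f x y).
Proof.
  unfold Form.
  assert (Ev : Nat.even (e + 2) = Nat.even e).
  { replace (e + 2)%nat with (e + 2 * 1)%nat by lia. apply Nat.even_add_mul_2. }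
  rewrite Ev.
  destruct (Nat.even e) eqn:He.
  - intros [k1 H1]. exists k1. intros. rewrite H1.
    replace ((e + 2) / 2)%nat with (S (e / 2)).
    + rewrite <- (tech_pow_Rmult (x ^ 2 + y ^ 2) (e / 2)); ring.
    + replace (e + 2)%nat with (e + 1 * 2)%nat by lia. rewrite Nat.div_add; lia.
  - intros. apply OF_h; auto.
Qed.

Lemma neg_pow (x : R) p : (- x) ^ p = (-1) ^ p * x ^ p.
Proof. rewrite <- Rpow_mult_distr. f_equal; ring. Qed.

Lemma Form_E p q : Form (p + q) (fun x y => (- x) ^ p * (- y) ^ q - x ^ p * y ^ q).
Proof.
  unfold Form. destruct (Nat.even (p + q)) eqn:He.
  - exists 0. intros. rewrite !neg_pow.
    apply Nat.even_spec in He. destruct He as [j Hj].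
    replace ((-1) ^ p * x ^ p * ((-1) ^ q * y ^ q)) with ((-1) ^ (p + q) * (x ^ p * y ^ q))
      by (rewrite pow_add; ring).
    rewrite Hj, pow_1_even. ring.
  - eapply OF_ext; [apply (OF_mono _ p q 0 (-2)); lia|].
    intros. rewrite !neg_pow.
    replace ((-1) ^ p * x ^ p * ((-1) ^ q * y ^ q)) with ((-1) ^ (p + q) * (x ^ p * y ^ q))
      by (rewrite pow_add; ring).
    assert (Ho : Nat.odd (p + q) = true) by (unfold Nat.odd; rewrite He; auto).
    apply Nat.odd_spec in Ho. destruct Ho as [j Hj]. rewrite Hj, Nat.add_1_r, pow_1_odd. ring.
Qed.

Definition Jform (a b : nat) : Prop :=
  exists F, Form (a + b) F /\
    forall x y x0 y0, CurveH x y x0 y0 -> J x y a b = F x0 y0.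

Lemma INR_S_neq0 a : INR (S a) <> 0.
Proof. apply not_0_INR; lia. Qed.

Lemma Jform_all : forall e a b, (a + b = e)%nat -> Jform a b.
Proof.
  intros e. induction e as [e IHe] using (well_founded_induction lt_wf).
  intros a b. revert a. induction b as [b IHb] using (well_founded_induction lt_wf).
  intros a Hab.
  destruct b as [|[|b']].
  - destruct a as [|[|a']].
    + exists (fun _ _ => PI). split.
      * unfold Form; simpl. exists 1. intros; simpl; ring.
      * intros; apply J_00.
    + exists (fun x y => -1 * ((- x) ^ 0 * (- y) ^ 1 - x ^ 0 * y ^ 1)
                     + 0 * ((- x) ^ 0 * (- y) ^ 1 - x ^ 0 * y ^ 1)).
      split.
      * apply Form_lin; apply (Form_E 0 1).
      * intros x y x0 y0 H. pose proof (J_ftc x y x0 y0 0 1 H) as F.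
        simpl in F. simpl. lra.
    + destruct (IHe a' ltac:(lia) a' 0%nat ltac:(lia)) as [F1 [HF1 EF1]].
      exists (fun x y => (INR (S a') / INR (S (S a'))) * ((x ^ 2 + y ^ 2) * F1 x y)
                 + (-1 / INR (S (S a'))) * ((- x) ^ (S a') * (- y) ^ 1 - x ^ (S a') * y ^ 1)).
      split.
      * replace (S (S a') + 0)%nat with (a' + 0 + 2)%nat by lia.
        apply Form_lin.
        -- apply Form_h; auto.
        -- replace (a' + 0 + 2)%nat with (S a' + 1)%nat by lia. apply Form_E.
      * intros x y x0 y0 H.
        pose proof (J_ftc x y x0 y0 (S a') 1 H) as F.
        pose proof (J_h x y x0 y0 a' 0 H) as Hh.
        rewrite <- (EF1 _ _ _ _ H).
        replace (S a' - 1)%nat with a' in F by lia.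
        replace (S a' + 1)%nat with (S (S a')) in F by lia.
        replace (a' + 2)%nat with (S (S a')) in Hh by lia.
        change (0 + 2)%nat with 2%nat in Hh. change (1 + 1)%nat with 2%nat in F.
        change (1 - 1)%nat with 0%nat in F.
        assert (HB : J x y a' 2 = (x0 ^ 2 + y0 ^ 2) * J x y a' 0 - J x y (S (S a')) 0) by lra.
        rewrite HB in F.
        pose proof (INR_S_neq0 (S a')) as N2.
        rewrite (S_INR (S a')) in *. simpl (INR 1) in F.
        field_simplify_eq; [|auto]. nra.
  - exists (fun x y => (1 / INR (S a)) * ((- x) ^ (S a) * (- y) ^ 0 - x ^ (S a) * y ^ 0)
                 + 0 * ((- x) ^ (S a) * (- y) ^ 0 - x ^ (S a) * y ^ 0)).
    split.
    + replace (a + 1)%nat with (S a + 0)%nat by lia. apply Form_lin; apply Form_E.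
    + intros x y x0 y0 H. pose proof (J_ftc x y x0 y0 (S a) 0 H) as F.
      replace (S a - 1)%nat with a in F by lia. simpl (0 + 1)%nat in F.
      simpl INR in F at 2.
      pose proof (INR_S_neq0 a).
      field_simplify_eq; auto. lra.
  - destruct (IHb b' ltac:(lia) (S (S a)) ltac:(lia)) as [F1 [HF1 EF1]].
    exists (fun x y => (INR (S b') / INR (S a)) * F1 x y
               + (1 / INR (S a)) * ((- x) ^ (S a) * (- y) ^ (S b') - x ^ (S a) * y ^ (S b'))).
    split.
    + replace (a + S (S b'))%nat with (S (S a) + b')%nat by lia.
      apply Form_lin; auto.
      replace (S (S a) + b')%nat with (S a + S b')%nat by lia. apply Form_E.
    + intros x y x0 y0 H. pose proof (J_ftc x y x0 y0 (S a) (S b') H) as F.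
      rewrite <- (EF1 _ _ _ _ H).
      replace (S a - 1)%nat with a in F by lia.
      replace (S b' + 1)%nat with (S (S b')) in F by lia.
      replace (S a + 1)%nat with (S (S a)) in F by lia.
      replace (S b' - 1)%nat with b' in F by lia.
      pose proof (INR_S_neq0 a).
      field_simplify_eq; auto. lra.
Qed.

Definition Zn (k P : nat) : nat := (P * (2 * k + 1) + 3 * k - 2 * k * k)%nat.

Lemma ndiv2 n P r : (n = 2 * P + r)%nat -> (r < 2)%nat -> (Z.of_nat n / 2 = Z.of_nat P)%Z.
Proof.
  intros -> Hr.
  replace (Z.of_nat (2 * P + r)) with (Z.of_nat r + Z.of_nat P * 2)%Z by lia.
  rewrite Z.div_add by lia. rewrite Z.div_small by lia. lia.
Qed.

Lemma zpar_eq k n P r : (n = 2 * P + r)%nat -> (r < 2)%nat -> (k <= P)%nat ->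
  zpar (2 * k + 1) n = Z.of_nat (Zn k P).
Proof.
  intros Hn Hr HP. unfold zpar, Zn. rewrite (ndiv2 n P r Hn Hr).
  replace (Z.of_nat (2 * k + 1) * Z.of_nat (2 * k + 1) - 5 * Z.of_nat (2 * k + 1) + 4)%Z
    with ((Z.of_nat k * (2 * Z.of_nat k - 3)) * 2)%Z by lia.
  rewrite Z.div_mul by lia. nia.
Qed.

Lemma qpar_eq k n P r : (n = 2 * P + r)%nat -> (r < 2)%nat -> (k <= P)%nat ->
  qpar (2 * k + 1) n = Z.of_nat (Zn k P + 2).
Proof.
  intros Hn Hr HP. unfold qpar, Zn. rewrite (ndiv2 n P r Hn Hr).
  replace (Z.of_nat (2 * k + 1) * Z.of_nat (2 * k + 1) - 5 * Z.of_nat (2 * k + 1))%Z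
    with (((Z.of_nat k - 2) * (2 * Z.of_nat k + 1)) * 2)%Z by lia.
  rewrite Z.div_mul by lia. nia.
Qed.

Lemma L3_eq n P r : (n = 2 * P + r)%nat -> (r < 2)%nat ->
  Z.to_nat ((Z.of_nat n - 1) / 2 + 1) = (P + r)%nat.
Proof.
  intros -> Hr.
  replace ((Z.of_nat (2 * P + r) - 1) / 2 + 1)%Z with ((Z.of_nat (2 * P + r) - 1 + 1 * 2) / 2)%Z
    by (rewrite Z.div_add; lia).
  destruct r as [|[|r]]; try lia.
  - replace (Z.of_nat (2 * P + 0) - 1 + 1 * 2)%Z with (1 + Z.of_nat P * 2)%Z by lia.
    rewrite Z.div_add by lia. rewrite Z.div_small by lia. lia.
  - replace (Z.of_nat (2 * P + 1) - 1 + 1 * 2)%Z with (0 + (Z.of_nat P + 1) * 2)%Z by lia.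
    rewrite Z.div_add by lia. rewrite Z.div_small by lia. lia.
Qed.

Lemma L3Z_eq n P r : (n = 2 * P + r)%nat -> (r < 2)%nat ->
  ((Z.of_nat n - 1) / 2 = Z.of_nat (P + r) - 1)%Z.
Proof.
  intros Hn Hr. pose proof (L3_eq n P r Hn Hr).
  assert (0 <= (Z.of_nat n - 1) / 2 + 1)%Z.
  { subst n. destruct r as [|[|r]]; [| |lia].
    - destruct P as [|P]; [compute; congruence|].
      apply Z.add_nonneg_nonneg; [apply Z.div_pos|]; lia.
    - apply Z.add_nonneg_nonneg; [apply Z.div_pos|]; lia. }
  rewrite <- H. rewrite Z2Nat.id; lia.
Qed.

Lemma expo_in k n P r A Bq : (n = 2 * P + r)%nat -> (r < 2)%nat -> (k <= P)%nat ->
  Nat.odd (A + Bq) = true -> (A + Bq <= n + 1)%nat ->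
  exists f, In f (basis k n) /\ forall u, f u = u ^ (A + (2 * k + 1) * Bq).
Proof.
  intros Hn Hr HP Ho Hle.
  apply Nat.odd_spec in Ho. destruct Ho as [w Hw].
  assert (Hwp : (w <= P)%nat) by lia.
  set (t := (P - w)%nat).
  assert (Ht : (A + Bq + 2 * t = 2 * P + 1)%nat) by lia.
  unfold basis.
  destruct (le_lt_dec (2 * t + A + 3) (2 * k)) as [Hc|Hc].
  -
    set (s := (k - 2 - t)%nat). set (j := (2 * k - 3 - 2 * t - A)%nat).
    exists (fun u : R => u ^ (Z.to_nat (2 * qpar (2 * k + 1) n + 2 * Z.of_nat s
                          + Z.of_nat j * (Z.of_nat (2 * k + 1) - 1) + 1))).
    split.
    + apply in_or_app; right; apply in_or_app; left.
      unfold fam2. apply in_flat_map. exists s. split.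
      * apply in_seq. unfold s; lia.
      * apply (in_map (fun j0 : nat => fun u : R =>
           u ^ (Z.to_nat (2 * qpar (2 * k + 1) n + 2 * Z.of_nat s
                          + Z.of_nat j0 * (Z.of_nat (2 * k + 1) - 1) + 1)))).
        apply in_seq. unfold j, s; lia.
    + intros u. f_equal. rewrite (qpar_eq k n P r Hn Hr HP).
      apply Nat2Z.inj. rewrite Z2Nat.id.
      * unfold Zn, s, j. nia.
      * lia.
  -
    set (e := (A + (2 * k + 1) * Bq)%nat).
    assert (He : exists p, e = (2 * p + 1)%nat).
    { exists (w + k * Bq)%nat. unfold e. lia. }
    destruct He as [p Hp].
    exists (fun u : R => u ^ (2 * p + 1)). split.
    + apply in_or_app; left. unfold fam1.
      apply (in_map (fun p0 : nat => fun u : R => u ^ (2 * p0 + 1))).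
      apply in_seq. rewrite (zpar_eq k n P r Hn Hr HP).
      replace (Z.of_nat (Zn k P) + 1)%Z with (Z.of_nat (Zn k P + 1)) by lia.
      rewrite Nat2Z.id. unfold Zn. unfold e in Hp. nia.
    + intros u. fold e. rewrite Hp. reflexivity.
Qed.

Lemma basis_cases k n P r f : (n = 2 * P + r)%nat -> (r < 2)%nat -> (k <= P)%nat ->
  In f (basis k n) ->
  (exists A Bq, Nat.odd (A + Bq) = true /\ (A + Bq <= n + 1)%nat /\
      forall u, f u = u ^ (A + (2 * k + 1) * Bq)) \/
  (exists l, (2 * l + 1 <= n)%nat /\ forall u, f u = (u ^ 2 + u ^ (2 * (2 * k + 1))) ^ (l + 1)).
Proof.
  intros Hn Hr HP Hf. unfold basis in Hf.
  apply in_app_or in Hf. destruct Hf as [Hf|Hf]; [|apply in_app_or in Hf; destruct Hf as [Hf|Hf]].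
  -
    left. unfold fam1 in Hf. apply in_map_iff in Hf. destruct Hf as [p [<- Hp]].
    apply in_seq in Hp. rewrite (zpar_eq k n P r Hn Hr HP) in Hp.
    replace (Z.of_nat (Zn k P) + 1)%Z with (Z.of_nat (Zn k P + 1)) in Hp by lia.
    rewrite Nat2Z.id in Hp. unfold Zn in Hp.
    destruct (le_lt_dec (2 * p + 1) (2 * P + 1)) as [Hc|Hc].
    + exists (2 * p + 1)%nat, 0%nat. split; [|split].
      * apply Nat.odd_spec. exists p. lia.
      * lia.
      * intros; f_equal; lia.
    + assert (Hk : (0 < k)%nat) by nia.
      set (d := (p - P)%nat).
      set (qd := ((d + k - 1) / k)%nat).
      set (rr := ((d + k - 1) mod k)%nat).
      assert (Hdm : (d + k - 1 = k * qd + rr)%nat) by (apply Nat.div_mod; lia).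
      assert (Hrr : (rr < k)%nat) by (apply Nat.mod_upper_bound; lia).
      assert (H1 : (d <= k * qd)%nat) by lia.
      assert (H2 : (k * qd < k * (2 * P + 4 - 2 * k))%nat) by nia.
      assert (H3 : (qd < 2 * P + 4 - 2 * k)%nat).
      { destruct (le_lt_dec (2 * P + 4 - 2 * k) qd) as [Hq|Hq]; [|auto].
        exfalso. assert (k * (2 * P + 4 - 2 * k) <= k * qd)%nat by (apply Nat.mul_le_mono_l; auto). lia. }
      exists (2 * p + 1 - (2 * k + 1) * qd)%nat, qd. split; [|split].
      * apply Nat.odd_spec. exists (p - k * qd)%nat. nia.
      * nia.
      * intros; f_equal; nia.
  -
    left. unfold fam2 in Hf. apply in_flat_map in Hf. destruct Hf as [s [Hs Hf]].
    apply in_map_iff in Hf. destruct Hf as [j [<- Hj]].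
    apply in_seq in Hs. apply in_seq in Hj.
    exists (2 * s + 1 - j)%nat, (2 * P - 2 * k + 4 + j)%nat. split; [|split].
    + apply Nat.odd_spec. exists (P - k + 2 + s)%nat. lia.
    + lia.
    + intros u. f_equal. rewrite (qpar_eq k n P r Hn Hr HP).
      apply Nat2Z.inj. rewrite Z2Nat.id; [|lia]. unfold Zn. nia.
  -
    right. unfold fam3 in Hf. apply in_map_iff in Hf. destruct Hf as [l [<- Hl]].
    apply in_seq in Hl. rewrite (L3_eq n P r Hn Hr) in Hl.
    exists l. split; [lia|]. intros; reflexivity.
Qed.

Lemma fam2_len k n : length (fam2 k n) = ((k - 1) * k)%nat.
Proof.
  unfold fam2.
  assert (G : forall t, length (flat_map (fun s => map (fun j => fun u : R =>
           u ^ (Z.to_nat (2 * qpar (2 * k + 1) n + 2 * Z.of_nat s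
                          + Z.of_nat j * (Z.of_nat (2 * k + 1) - 1) + 1)))
        (seq 0 (2 * s + 2))) (seq 0 t)) = (t * (t + 1))%nat).
  { induction t as [|t IH]; [reflexivity|].
    rewrite seq_S, flat_map_app, length_app, IH. simpl.
    rewrite app_nil_r, length_map, length_seq. lia. }
  rewrite G. destruct k; simpl; lia.
Qed.

Lemma basis_len k n P r : (n = 2 * P + r)%nat -> (r < 2)%nat -> (k <= P)%nat ->
  (length (basis k n) + k * k = P * (2 * k + 1) + 2 * k + 1 + (P + r))%nat.
Proof.
  intros Hn Hr HP. unfold basis. rewrite !length_app, fam2_len.
  unfold fam1, fam3. rewrite !length_map, !length_seq.
  rewrite (L3_eq n P r Hn Hr). rewrite (zpar_eq k n P r Hn Hr HP).
  replace (Z.of_nat (Zn k P) + 1)%Z with (Z.of_nat (Zn k P + 1)) by lia.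
  rewrite Nat2Z.id. unfold Zn. destruct k; nia.
Qed.

Lemma part1 k n : (2 * k + 1 - 1 <= n)%nat ->
  INR (length (basis k n)) =
    IZR ((Z.of_nat n - 1) / 2) + IZR (Z.of_nat n / 2) * INR (2 * k + 1)
    - INR (2 * k + 1) ^ 2 / 4 + 3 / 2 * INR (2 * k + 1) + 3 / 4.
Proof.
  intros hn.
  set (P := (n / 2)%nat). set (r := (n mod 2)%nat).
  assert (Hn : (n = 2 * P + r)%nat) by (apply Nat.div_mod; lia).
  assert (Hr : (r < 2)%nat) by (apply Nat.mod_upper_bound; lia).
  assert (HP : (k <= P)%nat) by lia.
  pose proof (basis_len k n P r Hn Hr HP) as HL.
  assert (E : INR (length (basis k n)) = INR (P * (2 * k + 1) + 2 * k + 1 + (P + r)) - INR (k * k))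
    by (rewrite <- HL, plus_INR; ring).
  rewrite E, (L3Z_eq n P r Hn Hr), (ndiv2 n P r Hn Hr).
  rewrite minus_IZR, <- !INR_IZR_INZ.
  rewrite !plus_INR, !mult_INR. simpl (INR 1). simpl (INR 2). rewrite (plus_INR (2 * k) 1), (mult_INR 2 k). simpl (INR 2); simpl (INR 1). field.
Qed.

Lemma zero_at_0 (f : R -> R) : continuous f 0 -> (forall u, 0 < u -> f u = 0) -> f 0 = 0.
Proof.
  intros Hc Hz. apply continuity_pt_filterlim in Hc.
  destruct (Req_dec (f 0) 0) as [|Hn]; auto. exfalso.
  destruct (Hc (Rabs (f 0)) ltac:(apply Rabs_pos_lt; auto)) as [al [Hal Hx]].
  specialize (Hx (al / 2)). simpl in Hx. unfold R_dist in Hx.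
  rewrite Hz in Hx by lra.
  assert (Rabs (al / 2 - 0) < al).
  { rewrite Rminus_0_r, Rabs_pos_eq; lra. }
  assert (Hd : D_x no_cond 0 (al / 2)) by (split; [exact I| apply Rlt_not_eq; lra]).
  specialize (Hx (conj Hd H)).
  rewrite Rminus_0_l, Rabs_Ropp in Hx. lra.
Qed.

Fixpoint LC (c : nat -> R) (ER : list (nat * nat)) (d i : nat) (u : R) : R :=
  match ER with
  | nil => 0
  | (e, L) :: ER' => c i * (u ^ e * (1 + u ^ d) ^ L) + LC c ER' d (S i) u
  end.

Fixpoint phi (K : nat) (c : nat -> R) (ER : list (nat * nat)) (d i : nat) (u : R) : R :=
  match ER with
  | nil => 0
  | (e, L) :: ER' => (if Nat.ltb e K then 0 else c i * (u ^ (e - K) * (1 + u ^ d) ^ L))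
                     + phi K c ER' d (S i) u
  end.

Lemma phi_a K c ER d i u :
  (forall j e L, nth_error ER j = Some (e, L) -> (e < K)%nat -> c (i + j)%nat = 0) ->
  u ^ K * phi K c ER d i u = LC c ER d i u.
Proof.
  revert i. induction ER as [|[e L] ER IH]; intros i H; simpl.
  - ring.
  - rewrite Rmult_plus_distr_l, IH.
    + f_equal. destruct (Nat.ltb_spec e K).
      * replace (c i) with 0 by (symmetry; rewrite <- (Nat.add_0_r i); apply (H 0%nat e L); simpl; auto). ring.
      * replace e with (K + (e - K))%nat at 2 by lia. rewrite pow_add. ring.
    + intros j e' L' Hj Hl. replace (S i + j)%nat with (i + S j)%nat by lia.
      apply (H (S j) e' L'); auto.
Qed.

Lemma phi_cont K c ER d i : continuous (phi K c ER d i) 0.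
Proof.
  revert i. induction ER as [|[e L] ER IH]; intros i; simpl.
  - apply cont_const.
  - apply cont_plus; auto. destruct (Nat.ltb e K).
    + apply cont_const.
    + apply cont_mult; [apply cont_const|]. apply cont_mult.
      * apply cont_pow. apply continuous_id.
      * apply cont_pow. apply cont_plus; [apply cont_const|]. apply cont_pow, continuous_id.
Qed.

Lemma phi_c0 K c ER d i : ~ In K (map fst ER) -> phi K c ER d i 0 = 0.
Proof.
  revert i. induction ER as [|[e L] ER IH]; intros i H; simpl; [auto|].
  simpl in H. rewrite IH by tauto.
  destruct (Nat.ltb_spec e K); [ring|].
  replace (e - K)%nat with (S (e - K - 1)) by lia. simpl. ring.
Qed.

Lemma phi_c K c ER d i j L : NoDup (map fst ER) -> nth_error ER j = Some (K, L) ->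
  phi K c ER d i 0 = c (i + j)%nat * (1 + 0 ^ d) ^ L.
Proof.
  revert i j. induction ER as [|[e L'] ER IH]; intros i j Hnd Hj.
  - destruct j; discriminate.
  - simpl in Hnd. inversion Hnd as [|a b Hni Hnd']; subst.
    destruct j as [|j].
    + simpl in Hj. injection Hj as -> ->. simpl.
      rewrite phi_c0 by auto. rewrite Nat.ltb_irrefl, Nat.sub_diag, Nat.add_0_r. simpl; ring.
    + simpl in Hj. simpl. rewrite (IH (S i) j Hnd' Hj).
      replace (S i + j)%nat with (i + S j)%nat by lia.
      assert (e <> K).
      { intros ->. apply Hni. apply nth_error_In in Hj.
        apply (in_map fst) in Hj. exact Hj. }
      destruct (Nat.ltb_spec e K); [ring|].
      replace (e - K)%nat with (S (e - K - 1)) by lia. simpl. ring.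
Qed.

Lemma LC_indep d c ER : NoDup (map fst ER) ->
  (forall u, 0 < u -> LC c ER d 0 u = 0) -> forall j, (j < length ER)%nat -> c j = 0.
Proof.
  intros Hnd Hz.
  assert (Main : forall K j e L, nth_error ER j = Some (e, L) -> (e < K)%nat -> c j = 0).
  { induction K as [|K IH]; intros j e L Hj Hl; [lia|].
    destruct (Nat.eq_dec e K) as [->|Hne]; [|apply (IH j e L); auto; lia].
    assert (Hphi : forall u, 0 < u -> phi K c ER d 0 u = 0).
    { intros u Hu. pose proof (phi_a K c ER d 0 u) as Ha.
      rewrite Hz in Ha by auto.
      assert (u ^ K <> 0) by (apply pow_nonzero; lra).
      specialize (Ha ltac:(intros j' e' L' Hj' Hl'; simpl; apply (IH j' e' L'); auto)).
      apply Rmult_integral in Ha. destruct Ha; [contradiction|auto]. }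
    pose proof (zero_at_0 _ (phi_cont K c ER d 0) Hphi) as H0.
    rewrite (phi_c K c ER d 0 j L Hnd Hj) in H0. simpl in H0.
    apply Rmult_integral in H0. destruct H0 as [|H0]; auto.
    exfalso. apply (pow_nonzero (1 + 0 ^ d) L); auto.
    destruct d; simpl; lra. }
  intros j Hj.
  destruct (nth_error ER j) as [[e L]|] eqn:E.
  - apply (Main (S e) j e L); auto.
  - apply nth_error_None in E. lia.
Qed.

Inductive Rep (d : nat) : list (R -> R) -> list (nat * nat) -> Prop :=
| Rep_nil : Rep d nil nil
| Rep_cons f B e L ER : (forall u, f u = u ^ e * (1 + u ^ d) ^ L) -> Rep d B ER ->
    Rep d (f :: B) ((e, L) :: ER).

Lemma Rep_LC d B ER c i u : Rep d B ER -> lincomb_from c B i u = LC c ER d i u.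
Proof.
  intros H. revert i. induction H; intros i; simpl; auto.
  rewrite H, IHRep. auto.
Qed.

Lemma Rep_len d B ER : Rep d B ER -> length B = length ER.
Proof. induction 1; simpl; auto. Qed.

Lemma Rep_app d B1 E1 B2 E2 : Rep d B1 E1 -> Rep d B2 E2 -> Rep d (B1 ++ B2) (E1 ++ E2).
Proof. induction 1; intros; simpl; auto. constructor; auto. Qed.

Lemma Rep_map {A : Type} d (f : A -> R -> R) g1 g2 (l : list A) :
  (forall a u, f a u = u ^ (g1 a) * (1 + u ^ d) ^ (g2 a)) ->
  Rep d (map f l) (map (fun a => (g1 a, g2 a)) l).
Proof. intros H; induction l; simpl; constructor; auto. Qed.

Lemma Rep_flat_map {A : Type} d (F : A -> list (R -> R)) G (l : list A) :
  (forall a, Rep d (F a) (G a)) -> Rep d (flat_map F l) (flat_map G l).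
Proof. intros H; induction l; simpl; [constructor|]. apply Rep_app; auto. Qed.

Lemma NoDup_flat_map' {A Bt : Type} (f : A -> list Bt) (l : list A) :
  NoDup l -> (forall a, In a l -> NoDup (f a)) ->
  (forall a b x, In a l -> In b l -> a <> b -> In x (f a) -> In x (f b) -> False) ->
  NoDup (flat_map f l).
Proof.
  induction l as [|a l IH]; intros Hnd Hf Hd; simpl; [constructor|].
  inversion Hnd; subst.
  apply NoDup_app.
  - apply Hf; simpl; auto.
  - apply IH; auto. intros; apply Hf; simpl; auto.
    intros a' b' x Ha Hb; apply Hd; simpl; auto.
  - intros x Hx Hx'. apply in_flat_map in Hx'. destruct Hx' as [b [Hb Hxb]].
    apply (Hd a b x); simpl; auto. intros ->; contradiction.
Qed.

Lemma map_fst_flat_map {A : Type} (G : A -> list (nat * nat)) l :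
  map fst (flat_map G l) = flat_map (fun a => map fst (G a)) l.
Proof. induction l; simpl; auto. rewrite map_app, IHl. auto. Qed.

Lemma fam2_expo k n P r s j : (n = 2 * P + r)%nat -> (r < 2)%nat -> (k <= P)%nat ->
  Z.to_nat (2 * qpar (2 * k + 1) n + 2 * Z.of_nat s
            + Z.of_nat j * (Z.of_nat (2 * k + 1) - 1) + 1)
  = (2 * (Zn k P + 2) + 2 * s + 2 * k * j + 1)%nat.
Proof.
  intros Hn Hr HP. rewrite (qpar_eq k n P r Hn Hr HP).
  apply Nat2Z.inj. rewrite Z2Nat.id; nia.
Qed.

Definition ERb (k P r : nat) : list (nat * nat) :=
  map (fun p => ((2 * p + 1)%nat, 0%nat)) (seq 0 (Zn k P + 1))
  ++ flat_map (fun s => map (fun j => ((2 * (Zn k P + 2) + 2 * s + 2 * k * j + 1)%nat, 0%nat))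
                            (seq 0 (2 * s + 2))) (seq 0 (k - 1))
  ++ map (fun l => ((2 * (l + 1))%nat, (l + 1)%nat)) (seq 0 (P + r)).

Lemma basis_Rep k n P r : (n = 2 * P + r)%nat -> (r < 2)%nat -> (k <= P)%nat ->
  Rep (4 * k) (basis k n) (ERb k P r).
Proof.
  intros Hn Hr HP. unfold basis, ERb. apply Rep_app; [|apply Rep_app].
  - unfold fam1. rewrite (zpar_eq k n P r Hn Hr HP).
    replace (Z.of_nat (Zn k P) + 1)%Z with (Z.of_nat (Zn k P + 1)) by lia.
    rewrite Nat2Z.id.
    apply (Rep_map (4 * k) (fun p => fun u : R => u ^ (2 * p + 1))
                   (fun p => (2 * p + 1)%nat) (fun _ => 0%nat)).
    intros; simpl; ring.
  - unfold fam2. apply Rep_flat_map. intros s.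
    apply Rep_map. intros j u. rewrite (fam2_expo k n P r s j Hn Hr HP). simpl; ring.
  - unfold fam3. rewrite (L3_eq n P r Hn Hr).
    apply Rep_map. intros l u.
    replace (u ^ 2 + u ^ (2 * (2 * k + 1))) with (u ^ 2 * (1 + u ^ (4 * k))).
    + rewrite Rpow_mult_distr, <- pow_mult. auto.
    + replace (2 * (2 * k + 1))%nat with (2 + 4 * k)%nat by lia. rewrite pow_add. ring.
Qed.

Lemma ERb_NoDup k P r : NoDup (map fst (ERb k P r)).
Proof.
  unfold ERb. rewrite !map_app, !map_map, map_fst_flat_map.
  simpl.
  apply NoDup_app; [|apply NoDup_app|].
  - apply Injective_map_NoDup_in; [intros; lia|apply seq_NoDup].
  - apply NoDup_flat_map'; [apply seq_NoDup| |].
    + intros s Hs. apply in_seq in Hs. rewrite map_map; simpl.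
      apply Injective_map_NoDup_in; [intros; nia|apply seq_NoDup].
    + intros a b x Ha Hb Hab Hxa Hxb. rewrite map_map in Hxa, Hxb. simpl in *.
      apply in_seq in Ha. apply in_seq in Hb.
      apply in_map_iff in Hxa. destruct Hxa as [j [Hj _]].
      apply in_map_iff in Hxb. destruct Hxb as [j' [Hj' _]].
      rewrite <- Hj' in Hj.
      assert (E : (a + j * k = b + j' * k)%nat) by lia.
      apply (f_equal (fun z => z mod k)) in E.
      rewrite !Nat.Div0.mod_add, !Nat.mod_small in E by lia. lia.
  - apply Injective_map_NoDup_in; [intros; lia|apply seq_NoDup].
  - intros x Hx Hx'. apply in_flat_map in Hx. destruct Hx as [s [Hs Hx]].
    rewrite map_map in Hx. simpl in Hx. apply in_map_iff in Hx. destruct Hx as [j [<- _]].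
    apply in_map_iff in Hx'. destruct Hx' as [l [Hl _]]. lia.
  - intros x Hx Hx'. apply in_map_iff in Hx. destruct Hx as [p [<- Hp]].
    apply in_seq in Hp.
    apply in_app_or in Hx'. destruct Hx' as [Hx'|Hx'].
    + apply in_flat_map in Hx'. destruct Hx' as [s [Hs Hx]].
      rewrite map_map in Hx. simpl in Hx. apply in_map_iff in Hx. destruct Hx as [j [Hj _]].
      lia.
    + apply in_map_iff in Hx'. destruct Hx' as [l [Hl _]]. lia.
Qed.

Lemma part2 k n : (2 * k + 1 - 1 <= n)%nat ->
  forall c : nat -> R,
    (forall u, 0 < u -> lincomb c (basis k n) u = 0) ->
    forall i, (i < length (basis k n))%nat -> c i = 0.
Proof.
  intros hn c Hz i Hi.
  set (P := (n / 2)%nat). set (r := (n mod 2)%nat).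
  assert (Hn : (n = 2 * P + r)%nat) by (apply Nat.div_mod; lia).
  assert (Hr : (r < 2)%nat) by (apply Nat.mod_upper_bound; lia).
  assert (HP : (k <= P)%nat) by lia.
  pose proof (basis_Rep k n P r Hn Hr HP) as HR.
  apply (LC_indep (4 * k) c (ERb k P r) (ERb_NoDup k P r)).
  - intros u Hu. rewrite <- (Rep_LC _ _ _ c 0 u HR). apply Hz; auto.
  - rewrite <- (Rep_len _ _ _ HR). auto.
Qed.

Lemma rad_cs m u : (1 <= m)%nat -> 0 < u ->
  radius m u * cos (ang0 m u) = u /\ radius m u * sin (ang0 m u) = u ^ m.
Proof.
  intros Hm Hu. unfold radius, ang0. rewrite cos_atan, sin_atan.
  set (w := u ^ (m - 1)).
  assert (Hs : 0 < sqrt (1 + w²)) by (apply sqrt_lt_R0; unfold Rsqr; nra).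
  assert (E : u ^ 2 + u ^ (2 * m) = (u * u) * (1 + w²)).
  { unfold w, Rsqr. rewrite <- pow_add. replace (2 * m)%nat with (2 + (m - 1 + (m - 1)))%nat by lia.
    rewrite pow_add. simpl. ring. }
  rewrite E, sqrt_mult_alt by nra. rewrite sqrt_square by lra.
  split.
  - field. lra.
  - assert (Hw : u * w = u ^ m) by (unfold w; rewrite tech_pow_Rmult; f_equal; lia).
    rewrite <- Hw. fold w. field. lra.
Qed.

Lemma curve_plus m u : (1 <= m)%nat -> 0 < u ->
  CurveH (Lplus_x m u) (Lplus_y m u) (- u) (- u ^ m).
Proof.
  intros Hm Hu. destruct (rad_cs m u Hm Hu) as [Hc Hs].
  unfold Lplus_x, Lplus_y. set (r := radius m u) in *. set (a := ang0 m u) in *.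
  unfold CurveH. refine (conj _ (conj _ (conj _ (conj _ (conj _ (conj _ _)))))); try intros t.
  - auto_derive; auto. replace (a + PI + - t) with (a + PI - t) by rring. rring.
  - auto_derive; auto. replace (a + PI + - t) with (a + PI - t) by rring. rring.
  - rewrite Rminus_0_r, neg_cos. lra.
  - rewrite Rminus_0_r, neg_sin. lra.
  - replace (a + PI - PI) with a by ring. lra.
  - replace (a + PI - PI) with a by ring. lra.
  - rewrite <- Hs, <- Hc.
    replace ((r * cos (a + PI - t)) ^ 2 + (r * sin (a + PI - t)) ^ 2)
      with (r * r * ((sin (a + PI - t))² + (cos (a + PI - t))²)) by (unfold Rsqr; ring).
    replace ((- (r * cos a)) ^ 2 + (- (r * sin a)) ^ 2)
      with (r * r * ((sin a)² + (cos a)²)) by (unfold Rsqr; ring).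
    rewrite !sin2_cos2. ring.
Qed.

Lemma curve_minus m u : (1 <= m)%nat -> 0 < u ->
  CurveH (Lminus_x m u) (Lminus_y m u) u (u ^ m).
Proof.
  intros Hm Hu. destruct (rad_cs m u Hm Hu) as [Hc Hs].
  unfold Lminus_x, Lminus_y. set (r := radius m u) in *. set (a := ang0 m u) in *.
  unfold CurveH. refine (conj _ (conj _ (conj _ (conj _ (conj _ (conj _ _)))))); try intros t.
  - auto_derive; auto. replace (a + - t) with (a - t) by rring. rring.
  - auto_derive; auto. replace (a + - t) with (a - t) by rring. rring.
  - rewrite Rminus_0_r. lra.
  - rewrite Rminus_0_r. lra.
  - rewrite cos_minus, cos_PI, sin_PI. lra.
  - rewrite sin_minus, cos_PI, sin_PI. lra.
  - rewrite <- Hs, <- Hc.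
    replace ((r * cos (a - t)) ^ 2 + (r * sin (a - t)) ^ 2)
      with (r * r * ((sin (a - t))² + (cos (a - t))²)) by (unfold Rsqr; ring).
    replace ((r * cos a) ^ 2 + (r * sin a) ^ 2)
      with (r * r * ((sin a)² + (cos a)²)) by (unfold Rsqr; ring).
    rewrite !sin2_cos2. ring.
Qed.

Definition MC (n : nat) (c d : nat -> nat -> R) (x y : R -> R) : R :=
  sum_f_R0 (fun i => sum_f_R0 (fun j => d i j * J x y i (j + 1) + c i j * J x y (i + 1) j)
                              (n - i)) n.

Lemma sum_mul_r (f : nat -> R) N a : sum_f_R0 f N * a = sum_f_R0 (fun i => f i * a) N.
Proof. rewrite Rmult_comm, scal_sum. auto. Qed.

Lemma line_MC n c d x y x0 y0 : CurveH x y x0 y0 ->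
  line_integral (poly2 d n) (fun X Y => - poly2 c n X Y) x y 0 PI = MC n c d x y.
Proof.
  intros H. pose proof H as H'. destruct H' as (Hx & Hy & _).
  unfold line_integral, MC.
  rewrite (RInt_ext _ (fun t => sum_f_R0 (fun i => sum_f_R0 (fun j =>
        d i j * (x t ^ i * y t ^ (j + 1)) + c i j * (x t ^ (i + 1) * y t ^ j)) (n - i)) n)).
  - rewrite RInt_sumR.
    + apply sum_eq. intros i _. rewrite RInt_sumR.
      * apply sum_eq. intros j _. unfold J.
        rewrite RInt_plusR, !RInt_scalR; auto;
          try (intros; apply mono_cont with x0 y0; auto);
          intros; apply cont_mult; try apply cont_const; apply mono_cont with x0 y0; auto.
      * intros j t. apply cont_plus; apply cont_mult; try apply cont_const;
          apply mono_cont with x0 y0; auto.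
    + intros i t. apply cont_sum. intros j.
      apply cont_plus; apply cont_mult; try apply cont_const; apply mono_cont with x0 y0; auto.
  - intros t _.
    rewrite (is_derive_unique _ _ _ (Hx t)), (is_derive_unique _ _ _ (Hy t)).
    unfold poly2.
    replace (- sum_f_R0 (fun i => sum_f_R0 (fun j => c i j * x t ^ i * y t ^ j) (n - i)) n * - x t)
      with (sum_f_R0 (fun i => sum_f_R0 (fun j => c i j * x t ^ i * y t ^ j) (n - i)) n * x t)
      by rring.
    rewrite !sum_mul_r, <- sum_plus. apply sum_eq. intros i _.
    rewrite !sum_mul_r, <- sum_plus. apply sum_eq. intros j _.
    rewrite !pow_add. simpl. ring.
Qed.

Lemma melnikov_MC k n ap bp am bm u : 0 < u ->
  melnikov_u (2 * k + 1) n ap bp am bm u =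
  MC n ap bp (Lplus_x (2 * k + 1) u) (Lplus_y (2 * k + 1) u)
  + MC n am bm (Lminus_x (2 * k + 1) u) (Lminus_y (2 * k + 1) u).
Proof.
  intros Hu. unfold melnikov_u.
  rewrite (line_MC _ _ _ _ _ _ _ (curve_plus (2 * k + 1) u ltac:(lia) Hu)).
  rewrite (line_MC _ _ _ _ _ _ _ (curve_minus (2 * k + 1) u ltac:(lia) Hu)).
  auto.
Qed.

Lemma lf_lin c c' al be B i u :
  lincomb_from (fun j => al * c j + be * c' j) B i u =
  al * lincomb_from c B i u + be * lincomb_from c' B i u.
Proof. revert i; induction B; intros i; simpl; [ring|]. rewrite IHB. ring. Qed.

Lemma lf_ext c c' B i u : (forall j, (i <= j)%nat -> c j = c' j) ->
  lincomb_from c B i u = lincomb_from c' B i u.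
Proof.
  revert i; induction B; intros i H; simpl; auto.
  rewrite H by lia. rewrite (IHB (S i)); auto. intros; apply H; lia.
Qed.

Lemma lf_zero c B i u : (forall j, (i <= j)%nat -> c j = 0) -> lincomb_from c B i u = 0.
Proof.
  revert i; induction B; intros i H; simpl; auto.
  rewrite H by lia. rewrite (IHB (S i)); [ring|]. intros; apply H; lia.
Qed.

Lemma lf_In f B : In f B -> forall i, exists c, forall u, lincomb_from c B i u = f u.
Proof.
  induction B as [|g B IH]; intros Hf i; [destruct Hf|].
  destruct Hf as [<-|Hf].
  - exists (fun j => if Nat.eqb j i then 1 else 0). intros u. simpl.
    rewrite Nat.eqb_refl. rewrite lf_zero; [ring|].
    intros j Hj. destruct (Nat.eqb_spec j i); [lia|auto].
  - destruct (IH Hf (S i)) as [c Hc].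
    exists (fun j => if Nat.eqb j i then 0 else c j). intros u. simpl.
    rewrite Nat.eqb_refl. rewrite <- (Hc u). rewrite (lf_ext _ c); [ring|].
    intros j Hj. destruct (Nat.eqb_spec j i); [lia|auto].
Qed.

Definition Sp (k n : nat) (f : R -> R) : Prop :=
  exists c, forall u, 0 < u -> f u = lincomb c (basis k n) u.

Lemma S_lin k n f g al be : Sp k n f -> Sp k n g -> Sp k n (fun u => al * f u + be * g u).
Proof.
  intros [c Hc] [c' Hc']. exists (fun j => al * c j + be * c' j).
  intros u Hu. unfold lincomb. rewrite lf_lin, Hc, Hc' by auto. auto.
Qed.

Lemma S_ext k n f g : Sp k n f -> (forall u, 0 < u -> f u = g u) -> Sp k n g.
Proof. intros [c Hc] E. exists c. intros u Hu. rewrite <- E by auto. auto. Qed.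

Lemma S_zero k n : Sp k n (fun _ => 0).
Proof. exists (fun _ => 0). intros; unfold lincomb; rewrite lf_zero; auto. Qed.

Lemma S_sum k n (f : nat -> R -> R) N : (forall i, (i <= N)%nat -> Sp k n (f i)) ->
  Sp k n (fun u => sum_f_R0 (fun i => f i u) N).
Proof.
  induction N as [|N IH]; intros H; simpl.
  - apply H; lia.
  - eapply S_ext; [apply (S_lin k n (fun u => sum_f_R0 (fun i => f i u) N) (f (S N)) 1 1);
      [apply IH; intros; apply H; lia|apply H; lia]|].
    intros; simpl; ring.
Qed.

Lemma S_In k n f : In f (basis k n) -> Sp k n f.
Proof.
  intros Hf. destruct (lf_In f _ Hf 0) as [c Hc]. exists c. intros u _. unfold lincomb. auto.
Qed.

Lemma nsplit n : exists P r, (n = 2 * P + r)%nat /\ (r < 2)%nat.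
Proof.
  exists (n / 2)%nat, (n mod 2)%nat. split; [apply Nat.div_mod; lia|apply Nat.mod_upper_bound; lia].
Qed.

Lemma Sp_expo k n A Bq : (2 * k + 1 - 1 <= n)%nat -> Nat.odd (A + Bq) = true ->
  (A + Bq <= n + 1)%nat -> Sp k n (fun u => u ^ (A + (2 * k + 1) * Bq)).
Proof.
  intros hn Ho Hle. destruct (nsplit n) as [P [r [Hn Hr]]].
  destruct (expo_in k n P r A Bq Hn Hr ltac:(lia) Ho Hle) as [f [Hf E]].
  eapply S_ext; [apply S_In; eauto|]. intros; auto.
Qed.

Lemma Sp_h k n L : (2 * k + 1 - 1 <= n)%nat -> (1 <= L)%nat -> (2 * L <= n + 1)%nat ->
  Sp k n (fun u => (u ^ 2 + u ^ (2 * (2 * k + 1))) ^ L).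
Proof.
  intros hn H1 H2. destruct (nsplit n) as [P [r [Hn Hr]]].
  apply S_In. unfold basis. apply in_or_app; right; apply in_or_app; right.
  unfold fam3. replace L with (L - 1 + 1)%nat by lia.
  apply (in_map (fun l => fun u : R => (u ^ 2 + u ^ (2 * (2 * k + 1))) ^ (l + 1))).
  apply in_seq. rewrite (L3_eq n P r Hn Hr). lia.
Qed.

Lemma sq_sig sg u m : sg ^ 2 = 1 ->
  (sg * u) ^ 2 + (sg * u ^ m) ^ 2 = u ^ 2 + u ^ (2 * m).
Proof.
  intros Hs. rewrite !Rpow_mult_distr, Hs, <- pow_mult, Nat.mul_comm. ring.
Qed.

Lemma OF_S k n e F sg : (2 * k + 1 - 1 <= n)%nat -> sg ^ 2 = 1 -> OF e F ->
  Nat.odd e = true -> (e <= n + 1)%nat ->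
  Sp k n (fun u => F (sg * u) (sg * u ^ (2 * k + 1))).
Proof.
  intros hn Hs. induction 1; intros Ho Hle.
  - set (m := (2 * k + 1)%nat).
    eapply S_ext.
    + apply (S_sum k n (fun i u => (lam * sg ^ (p + q) * Binomial.C L i) *
                                  u ^ ((p + 2 * i) + m * (q + 2 * (L - i)))) L).
      intros i Hi. eapply S_ext; [apply (S_lin k n (fun u => u ^ ((p + 2 * i) + (2 * k + 1) * (q + 2 * (L - i)))) (fun _ => 0) (lam * sg ^ (p + q) * Binomial.C L i) 0);
        [apply (Sp_expo k n (p + 2 * i) (q + 2 * (L - i)) hn)|apply S_zero]|].
      * replace (p + 2 * i + (q + 2 * (L - i)))%nat with e by lia. auto.
      * lia.
      * intros u _. cbv beta. unfold m. ring.
    + intros u Hu. cbv beta. rewrite sq_sig by auto. rewrite binomial.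
      rewrite scal_sum. apply sum_eq. intros i Hi.
      rewrite !Rpow_mult_distr, pow_add.
      rewrite <- !pow_mult.
      replace (u ^ (p + 2 * i + m * (q + 2 * (L - i))))
        with (u ^ p * u ^ (2 * i) * u ^ (m * q) * u ^ (2 * m * (L - i)))
        by (rewrite <- !pow_add; f_equal; nia).
      ring.
  - eapply S_ext; [apply (S_lin k n (fun u => f (sg * u) (sg * u ^ (2 * k + 1))) (fun u => g (sg * u) (sg * u ^ (2 * k + 1))) 1 1); [apply IHOF1|apply IHOF2]; auto|].
    intros; simpl; ring.
  - eapply S_ext; [apply IHOF; auto|]. intros; simpl; auto.
Qed.

Lemma Form_S k n e F sg : (2 * k + 1 - 1 <= n)%nat -> sg ^ 2 = 1 -> Form e F ->
  (1 <= e <= n + 1)%nat -> Sp k n (fun u => F (sg * u) (sg * u ^ (2 * k + 1))).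
Proof.
  intros hn Hs HF He. unfold Form in HF. destruct (Nat.even e) eqn:Ev.
  - destruct HF as [kap Hk].
    apply Nat.even_spec in Ev. destruct Ev as [w Hw].
    eapply S_ext; [apply (S_lin k n (fun u => (u ^ 2 + u ^ (2 * (2 * k + 1))) ^ w) (fun _ => 0) (kap * PI) 0); [apply (Sp_h k n w hn)|apply S_zero]|].
    + lia.
    + lia.
    + intros u _. rewrite Hk, sq_sig by auto. rewrite Hw.
      replace (2 * w / 2)%nat with w by (rewrite Nat.mul_comm, Nat.div_mul; lia). ring.
  - apply (OF_S k n e F sg hn Hs HF); [unfold Nat.odd; rewrite Ev; auto|lia].
Qed.

Lemma Sp_Jplus k n a b : (2 * k + 1 - 1 <= n)%nat -> (1 <= a + b <= n + 1)%nat ->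
  Sp k n (fun u => J (Lplus_x (2 * k + 1) u) (Lplus_y (2 * k + 1) u) a b).
Proof.
  intros hn Hab. destruct (Jform_all (a + b) a b eq_refl) as [F [HF EF]].
  eapply S_ext; [apply (Form_S k n (a + b) F (-1) hn); auto; ring|].
  intros u Hu. rewrite (EF _ _ _ _ (curve_plus (2 * k + 1) u ltac:(lia) Hu)).
  f_equal; ring.
Qed.

Lemma Sp_Jminus k n a b : (2 * k + 1 - 1 <= n)%nat -> (1 <= a + b <= n + 1)%nat ->
  Sp k n (fun u => J (Lminus_x (2 * k + 1) u) (Lminus_y (2 * k + 1) u) a b).
Proof.
  intros hn Hab. destruct (Jform_all (a + b) a b eq_refl) as [F [HF EF]].
  eapply S_ext; [apply (Form_S k n (a + b) F 1 hn); auto; ring|].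
  intros u Hu. rewrite (EF _ _ _ _ (curve_minus (2 * k + 1) u ltac:(lia) Hu)).
  f_equal; ring.
Qed.

Lemma Sp_MC k n c d (X Y : nat -> R -> R -> R) :
  (2 * k + 1 - 1 <= n)%nat ->
  (forall a b, (1 <= a + b <= n + 1)%nat -> Sp k n (fun u => J (X (2 * k + 1)%nat u) (Y (2 * k + 1)%nat u) a b)) ->
  Sp k n (fun u => MC n c d (X (2 * k + 1)%nat u) (Y (2 * k + 1)%nat u)).
Proof.
  intros hn HJ. unfold MC.
  apply (S_sum k n (fun i u => sum_f_R0 (fun j => d i j * J (X (2 * k + 1)%nat u) (Y (2 * k + 1)%nat u) i (j + 1)
      + c i j * J (X (2 * k + 1)%nat u) (Y (2 * k + 1)%nat u) (i + 1) j) (n - i))).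
  intros i Hi.
  apply (S_sum k n (fun j u => d i j * J (X (2 * k + 1)%nat u) (Y (2 * k + 1)%nat u) i (j + 1)
      + c i j * J (X (2 * k + 1)%nat u) (Y (2 * k + 1)%nat u) (i + 1) j)).
  intros j Hj.
  apply (S_lin k n (fun u => J (X (2 * k + 1)%nat u) (Y (2 * k + 1)%nat u) i (j + 1))
                   (fun u => J (X (2 * k + 1)%nat u) (Y (2 * k + 1)%nat u) (i + 1) j));
    apply HJ; lia.
Qed.

Lemma part3 k n : (2 * k + 1 - 1 <= n)%nat ->
  forall ap bp am bm : nat -> nat -> R,
    exists c : nat -> R,
      forall u, 0 < u -> melnikov_u (2 * k + 1) n ap bp am bm u = lincomb c (basis k n) u.
Proof.
  intros hn ap bp am bm.
  assert (H : Sp k n (fun u => melnikov_u (2 * k + 1) n ap bp am bm u)).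
  { eapply S_ext; [apply (S_lin k n
        (fun u => MC n ap bp (Lplus_x (2 * k + 1)%nat u) (Lplus_y (2 * k + 1)%nat u))
        (fun u => MC n am bm (Lminus_x (2 * k + 1)%nat u) (Lminus_y (2 * k + 1)%nat u)) 1 1)|].
    - apply (Sp_MC k n ap bp Lplus_x Lplus_y hn). intros; apply Sp_Jplus; auto.
    - apply (Sp_MC k n am bm Lminus_x Lminus_y hn). intros; apply Sp_Jminus; auto.
    - intros u Hu. cbv beta. rewrite melnikov_MC by auto. ring. }
  destruct H as [c Hc]. exists c. auto.
Qed.

Lemma sum_lin (f g : nat -> R) al be N :
  sum_f_R0 (fun i => al * f i + be * g i) N = al * sum_f_R0 f N + be * sum_f_R0 g N.
Proof. induction N; simpl; [ring|]. rewrite IHN. ring. Qed.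

Lemma MC_lin n c c' d d' al be x y :
  MC n (fun i j => al * c i j + be * c' i j) (fun i j => al * d i j + be * d' i j) x y
  = al * MC n c d x y + be * MC n c' d' x y.
Proof.
  unfold MC. rewrite <- sum_lin. apply sum_eq. intros i _.
  rewrite <- sum_lin. apply sum_eq. intros j _. ring.
Qed.

Lemma sum_zero (f : nat -> R) N : (forall i, (i <= N)%nat -> f i = 0) -> sum_f_R0 f N = 0.
Proof.
  induction N as [|N IH]; intros H; simpl; [apply H; lia|].
  rewrite IH; [rewrite H; [ring|lia]|]. intros; apply H; lia.
Qed.

Lemma MC_zero n x y : MC n (fun _ _ => 0) (fun _ _ => 0) x y = 0.
Proof.
  unfold MC. apply sum_zero; intros; apply sum_zero; intros; ring.
Qed.

Definition Ip (k n : nat) (f : R -> R) : Prop :=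
  exists ap bp am bm, forall u, 0 < u -> melnikov_u (2 * k + 1) n ap bp am bm u = f u.

Lemma I_lin k n f g al be : Ip k n f -> Ip k n g -> Ip k n (fun u => al * f u + be * g u).
Proof.
  intros (ap & bp & am & bm & H) (ap' & bp' & am' & bm' & H').
  exists (fun i j => al * ap i j + be * ap' i j), (fun i j => al * bp i j + be * bp' i j),
         (fun i j => al * am i j + be * am' i j), (fun i j => al * bm i j + be * bm' i j).
  intros u Hu. rewrite melnikov_MC by auto. rewrite !MC_lin.
  rewrite <- H, <- H' by auto. rewrite !melnikov_MC by auto. ring.
Qed.

Lemma I_ext k n f g : Ip k n f -> (forall u, 0 < u -> f u = g u) -> Ip k n g.
Proof.
  intros (ap & bp & am & bm & H) E. exists ap, bp, am, bm. intros u Hu.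
  rewrite <- E by auto. auto.
Qed.

Lemma I_zero k n : Ip k n (fun _ => 0).
Proof.
  exists (fun _ _ => 0), (fun _ _ => 0), (fun _ _ => 0), (fun _ _ => 0).
  intros u Hu. rewrite melnikov_MC, !MC_zero by auto. ring.
Qed.

Lemma I_sum k n (f : nat -> R -> R) N : (forall i, (i <= N)%nat -> Ip k n (f i)) ->
  Ip k n (fun u => sum_f_R0 (fun i => f i u) N).
Proof.
  induction N as [|N IH]; intros H; simpl.
  - apply H; lia.
  - eapply I_ext; [apply (I_lin k n (fun u => sum_f_R0 (fun i => f i u) N) (f (S N)) 1 1);
      [apply IH; intros; apply H; lia|apply H; lia]|].
    intros; simpl; ring.
Qed.

Lemma I_lincomb k n c B : (forall f, In f B -> Ip k n f) ->
  forall i, Ip k n (fun u => lincomb_from c B i u).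
Proof.
  induction B as [|f B IH]; intros H i; simpl.
  - apply I_zero.
  - eapply I_ext; [apply (I_lin k n f (fun u => lincomb_from c B (S i) u) (c i) 1)|].
    + apply H; simpl; auto.
    + apply IH; intros; apply H; simpl; auto.
    + intros; simpl; ring.
Qed.

Lemma sum1_single (g : nat -> R) b N :
  sum_f_R0 (fun j => if Nat.eqb j b then g j else 0) N = if Nat.leb b N then g b else 0.
Proof.
  induction N as [|N IH]; cbn [sum_f_R0].
  - destruct b; simpl; [ring|auto].
  - rewrite IH. destruct (Nat.leb_spec b N), (Nat.eqb_spec (S N) b), (Nat.leb_spec b (S N));
      subst; try lia; try ring.
Qed.

Lemma sum2_single n a b (g : nat -> nat -> R) :
  sum_f_R0 (fun i => sum_f_R0 (fun j => if andb (Nat.eqb i a) (Nat.eqb j b) then g i j else 0)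
                              (n - i)) n
  = if Nat.leb (a + b) n then g a b else 0.
Proof.
  rewrite (sum_eq _ (fun i => if Nat.eqb i a then (if Nat.leb b (n - i) then g i b else 0) else 0)).
  - rewrite (sum1_single (fun i => if Nat.leb b (n - i) then g i b else 0)).
    destruct (Nat.leb_spec a n), (Nat.leb_spec b (n - a)), (Nat.leb_spec (a + b) n);
      try lia; auto.
  - intros i _. destruct (Nat.eqb i a); simpl.
    + apply sum1_single.
    + clear. induction (n - i)%nat; simpl; [auto|]. rewrite IHn0. ring.
Qed.

Lemma I_bp k n a b : (a + b <= n)%nat ->
  Ip k n (fun u => J (Lplus_x (2 * k + 1) u) (Lplus_y (2 * k + 1) u) a (b + 1)).
Proof.
  intros Hab.
  exists (fun _ _ => 0), (fun i j => if andb (Nat.eqb i a) (Nat.eqb j b) then 1 else 0),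
         (fun _ _ => 0), (fun _ _ => 0).
  intros u Hu. rewrite melnikov_MC, MC_zero by auto. unfold MC.
  rewrite (sum_eq _ (fun i => sum_f_R0 (fun j => if andb (Nat.eqb i a) (Nat.eqb j b)
      then J (Lplus_x (2 * k + 1) u) (Lplus_y (2 * k + 1) u) i (j + 1) else 0) (n - i))).
  - rewrite sum2_single. destruct (Nat.leb_spec (a + b) n); [ring|lia].
  - intros i _. apply sum_eq. intros j _. destruct (andb _ _); ring.
Qed.

Lemma I_ap k n a b : (a + b <= n)%nat ->
  Ip k n (fun u => J (Lplus_x (2 * k + 1) u) (Lplus_y (2 * k + 1) u) (a + 1) b).
Proof.
  intros Hab.
  exists (fun i j => if andb (Nat.eqb i a) (Nat.eqb j b) then 1 else 0), (fun _ _ => 0),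
         (fun _ _ => 0), (fun _ _ => 0).
  intros u Hu. rewrite melnikov_MC, MC_zero by auto. unfold MC.
  rewrite (sum_eq _ (fun i => sum_f_R0 (fun j => if andb (Nat.eqb i a) (Nat.eqb j b)
      then J (Lplus_x (2 * k + 1) u) (Lplus_y (2 * k + 1) u) (i + 1) j else 0) (n - i))).
  - rewrite sum2_single. destruct (Nat.leb_spec (a + b) n); [ring|lia].
  - intros i _. apply sum_eq. intros j _. destruct (andb _ _); ring.
Qed.

Lemma I_expo k n A Bq : Nat.odd (A + Bq) = true -> (A + Bq <= n + 1)%nat ->
  Ip k n (fun u => u ^ (A + (2 * k + 1) * Bq)).
Proof.
  intros Ho Hle. set (m := (2 * k + 1)%nat).
  set (Jp := fun u a b => J (Lplus_x m u) (Lplus_y m u) a b).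
  assert (I1 : Ip k n (fun u => INR A * Jp u (A - 1)%nat (Bq + 1)%nat)).
  { destruct A as [|A'].
    - eapply I_ext; [apply I_zero|]. intros; simpl; ring.
    - eapply I_ext; [apply (I_lin k n (fun u => J (Lplus_x (2 * k + 1) u) (Lplus_y (2 * k + 1) u) A' (Bq + 1)) (fun _ => 0) (INR (S A')) 0); [apply (I_bp k n A' Bq); lia|apply I_zero]|].
      intros u _. unfold Jp. simpl (S A' - 1)%nat. rewrite Nat.sub_0_r. unfold m. ring. }
  assert (I2 : Ip k n (fun u => INR Bq * Jp u (A + 1)%nat (Bq - 1)%nat)).
  { destruct Bq as [|B'].
    - eapply I_ext; [apply I_zero|]. intros; simpl; ring.
    - eapply I_ext; [apply (I_lin k n (fun u => J (Lplus_x (2 * k + 1) u) (Lplus_y (2 * k + 1) u) (A + 1) B') (fun _ => 0) (INR (S B')) 0); [apply (I_ap k n A B'); lia|apply I_zero]|].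
      intros u _. unfold Jp. simpl (S B' - 1)%nat. rewrite Nat.sub_0_r. unfold m. ring. }
  eapply I_ext; [apply (I_lin k n _ _ (1/2) (-1/2) I1 I2)|].
  intros u Hu. cbv beta. unfold Jp.
  pose proof (J_ftc _ _ _ _ A Bq (curve_plus m u ltac:(unfold m; lia) Hu)) as F.
  replace (1 / 2 * (INR A * J (Lplus_x m u) (Lplus_y m u) (A - 1) (Bq + 1)) +
           -1 / 2 * (INR Bq * J (Lplus_x m u) (Lplus_y m u) (A + 1) (Bq - 1)))
    with (1 / 2 * (INR A * J (Lplus_x m u) (Lplus_y m u) (A - 1) (Bq + 1) -
                   INR Bq * J (Lplus_x m u) (Lplus_y m u) (A + 1) (Bq - 1))) by lra.
  rewrite F. rewrite !Ropp_involutive.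
  rewrite !neg_pow.
  replace ((-1) ^ A * u ^ A * ((-1) ^ Bq * (u ^ m) ^ Bq)) with ((-1) ^ (A + Bq) * (u ^ A * (u ^ m) ^ Bq))
    by (rewrite pow_add; ring).
  apply Nat.odd_spec in Ho. destruct Ho as [w Hw]. rewrite Hw, Nat.add_1_r, pow_1_odd.
  rewrite <- pow_mult, <- pow_add. lra.
Qed.

Lemma I_h k n l : (2 * l + 1 <= n)%nat ->
  Ip k n (fun u => (u ^ 2 + u ^ (2 * (2 * k + 1))) ^ (l + 1)).
Proof.
  intros Hl. set (m := (2 * k + 1)%nat).
  set (Jp := fun u a b => J (Lplus_x m u) (Lplus_y m u) a b).
  assert (I1 : Ip k n (fun u => sum_f_R0 (fun i => Binomial.C l i *
                 (Jp u (2 * i + 2)%nat (2 * (l - i))%nat + Jp u (2 * i)%nat (2 * (l - i) + 2)%nat)) l)).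
  { apply (I_sum k n (fun i u => Binomial.C l i *
                 (Jp u (2 * i + 2)%nat (2 * (l - i))%nat + Jp u (2 * i)%nat (2 * (l - i) + 2)%nat))).
    intros i Hi.
    eapply I_ext; [apply (I_lin k n (fun u => Jp u (2 * i + 2)%nat (2 * (l - i))%nat + Jp u (2 * i)%nat (2 * (l - i) + 2)%nat) (fun _ => 0) (Binomial.C l i) 0); [|apply I_zero]|].
    - eapply I_ext; [apply (I_lin k n (fun u => J (Lplus_x (2 * k + 1) u) (Lplus_y (2 * k + 1) u) (2 * i + 1 + 1) (2 * (l - i))) (fun u => J (Lplus_x (2 * k + 1) u) (Lplus_y (2 * k + 1) u) (2 * i) (2 * (l - i) + 1 + 1)) 1 1); [apply (I_ap k n (2 * i + 1) (2 * (l - i)))|apply (I_bp k n (2 * i) (2 * (l - i) + 1))]; lia|].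
      intros u _. unfold Jp. cbv beta.
      replace (2 * i + 1 + 1)%nat with (2 * i + 2)%nat by lia.
      replace (2 * (l - i) + 1 + 1)%nat with (2 * (l - i) + 2)%nat by lia. fold m. ring.
    - intros u _. cbv beta. ring. }
  eapply I_ext; [apply (I_lin k n _ (fun _ => 0) (1 / PI) 0 I1 (I_zero k n))|].
  intros u Hu. cbv beta. unfold Jp.
  pose proof (curve_plus m u ltac:(unfold m; lia) Hu) as HC.
  set (x := Lplus_x m u). set (y := Lplus_y m u).
  set (h := (- u) ^ 2 + (- u ^ m) ^ 2).
  assert (Hh : h = u ^ 2 + u ^ (2 * m)).
  { unfold h. rewrite (Nat.mul_comm 2 m), pow_mult. ring. }
  rewrite (sum_eq _ (fun i => (Binomial.C l i * J x y (2 * i) (2 * (l - i))) * h)).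
  2:{ intros i _. rewrite (J_h x y (- u) (- u ^ m) (2 * i) (2 * (l - i)) HC). fold h. ring. }
  rewrite <- scal_sum.
  assert (E : sum_f_R0 (fun i => Binomial.C l i * J x y (2 * i) (2 * (l - i))) l = PI * h ^ l).
  { unfold J.
    rewrite (sum_eq _ (fun i => RInt (fun t => Binomial.C l i * (x t ^ (2 * i) * y t ^ (2 * (l - i)))) 0 PI)).
    2:{ intros i _. rewrite RInt_scalR; auto. intros; apply (mono_cont x y (- u) (- u ^ m)); auto. }
    rewrite <- RInt_sumR.
    2:{ intros i t. apply cont_mult; [apply cont_const|apply (mono_cont x y (- u) (- u ^ m)); auto]. }
    rewrite (RInt_ext _ (fun _ => h ^ l)).
    - rewrite RInt_const. unfold scal; simpl; unfold mult; simpl. rring.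
    - intros t _. destruct HC as (_ & _ & _ & _ & _ & _ & Hc).
      fold h in Hc. rewrite <- (Hc t), binomial. apply sum_eq. intros i _.
      rewrite !pow_mult. unfold x, y. rewrite Rmult_assoc. reflexivity. }
  rewrite E, Hh. field_simplify; [|apply PI_neq0]. rewrite pow_add. simpl. ring.
Qed.

Lemma part4 k n : (2 * k + 1 - 1 <= n)%nat ->
  forall c : nat -> R,
    exists ap bp am bm : nat -> nat -> R,
      forall u, 0 < u -> melnikov_u (2 * k + 1) n ap bp am bm u = lincomb c (basis k n) u.
Proof.
  intros hn c. destruct (nsplit n) as [P [r [Hn Hr]]].
  assert (H : Ip k n (fun u => lincomb_from c (basis k n) 0 u)).
  { apply I_lincomb. intros f Hf.
    destruct (basis_cases k n P r f Hn Hr ltac:(lia) Hf) as [(A & Bq & Ho & Hle & Ef)|(l & Hl & Ef)].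
    - eapply I_ext; [apply (I_expo k n A Bq Ho Hle)|]. intros; auto.
    - eapply I_ext; [apply (I_h k n l Hl)|]. intros; auto. }
  destruct H as (ap & bp & am & bm & H). exists ap, bp, am, bm. exact H.
Qed.

Theorem lemma3p7 (k n : nat) (hn : (2 * k + 1 - 1 <= n)%nat) :
  let m := (2 * k + 1)%nat in
  let B := basis k n in
  (* number of functions *)
  INR (length B) =
    IZR ((Z.of_nat n - 1) / 2) + IZR (Z.of_nat n / 2) * INR m
    - INR m ^ 2 / 4 + 3 / 2 * INR m + 3 / 4
  (* linear independence on (0, +oo) *)
  /\ (forall c : nat -> R,
        (forall u, 0 < u -> lincomb c B u = 0) ->
        forall i, (i < length B)%nat -> c i = 0)
  (* M(u) is a linear combination of the family *)
  /\ (forall ap bp am bm : nat -> nat -> R,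
        exists c : nat -> R,
          forall u, 0 < u -> melnikov_u m n ap bp am bm u = lincomb c B u)
  (* the coefficients are independent: every coefficient vector is attained *)
  /\ (forall c : nat -> R,
        exists ap bp am bm : nat -> nat -> R,
          forall u, 0 < u -> melnikov_u m n ap bp am bm u = lincomb c B u).
Proof.
  intros m B. subst m B.
  split; [apply part1; auto|].
  split; [apply part2; auto|].
  split; [apply part3; auto|apply part4; auto].
Qed.
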